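(* Let $R$ be a binary relation on $U$ and $x\in U$. The following are equivalent: (i) $R(x)$ is completely join-prime in $\wp(U)^{\vartriangle}$; (ii) $R(x)\not\subseteq\bigcup\{R(y)\mid y\in U,\ R(x)\not\subseteq R(y)\}$; (iii) there exists $w\in R(x)$ such that for all $y\in U$, $w\in R(y)$ implies $R(x)\subseteq R(y)$. Consequently $\mathcal J_p(\wp(U)^{\vartriangle})=\{R(x)\mid x\in U,\ \mathfrak{core}R(x)\neq\emptyset\}$ and $\mathcal J_p(\wp(U)^{\blacktriangle})=\{\breve R(x)\mid x\in U,\ \mathfrak{core}\breve R(x)\neq\emptyset\}$.
   Context: Let $U$ be a set and $R\subseteq U\times U$ a binary relation. For $x\in U$, $R(x)=\{y\in U\mid (x,y)\in R\}$ and $\breve R(x)=\{y\in U\mid (y,x)\in R\}$. $\mathfrak{core}R(x)=\{w\in R(x)\mid \text{for all }y\in U,\ w\in R(y)\text{ implies }R(x)\subseteq R(y)\}$, and $\mathfrak{core}\breve R(x)$ is defined likewise with $\breve R$ in place of $R$. For $X\subseteq U$: $X^{\blacktriangle}=\{x\in U\mid R(x)\cap X\neq\emptyset\}$ and $X^{\vartriangle}=\{x\in U\mid \breve R(x)\cap X\neq\emptyset\}$, so $\{x\}^{\vartriangle}=R(x)$, $\{x\}^{\blacktriangle}=\breve R(x)$. $\wp(U)^{\blacktriangle}=\{X^{\blacktriangle}\mid X\subseteq U\}$, $\wp(U)^{\vartriangle}=\{X^{\vartriangle}\mid X\subseteq U\}$, complete lattices under $\subseteq$ with joins given by unions. An element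 $p$ of a complete lattice $L$ is completely join-prime if $p\le\bigvee X$ implies $p\le x$ for some $x\in X$, for every $X\subseteq L$; $\mathcal J_p(L)$ denotes the set of such elements. *)

(* Defs.v *)
From mathcomp Require Import all_boot.
From mathcomp Require Export classical_sets.
Set Implicit Arguments. Unset Strict Implicit. Unset Printing Implicit Defensive.
Local Open Scope classical_set_scope.

Definition Rimg (U : Type) (R : set (U * U)) (x : U) : set U :=
  [set y | R (x, y)].
Definition Rbreve (U : Type) (R : set (U * U)) (x : U) : set U :=
  [set y | R (y, x)].

Definition coreR (U : Type) (R : set (U * U)) (x : U) : set U :=
  [set w | Rimg R x w /\ forall y, Rimg R y w -> Rimg R x `<=` Rimg R y].
Definition coreRbreve (U : Type) (R : set (U * U)) (x : U) : set U :=
  [set w | Rbreve R x w /\ forall y, Rbreve R y w -> Rbreve R x `<=` Rbreve R y].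

Definition bupper (U : Type) (R : set (U * U)) (X : set U) : set U :=
  [set x | Rimg R x `&` X !=set0].
Definition wupper (U : Type) (R : set (U * U)) (X : set U) : set U :=
  [set x | Rbreve R x `&` X !=set0].

Definition wlattice (U : Type) (R : set (U * U)) : set (set U) :=
  [set wupper R X | X in [set: set U]].
Definition blattice (U : Type) (R : set (U * U)) : set (set U) :=
  [set bupper R X | X in [set: set U]].

(* Completely join-prime elements of a complete lattice L of subsets of U,
   ordered by inclusion, whose joins are unions (as is the case for
   wp(U)^vartriangle and wp(U)^blacktriangle). *)
Definition cjp (U : Type) (L : set (set U)) (p : set U) : Prop :=
  L p /\
  forall X : set (set U), X `<=` L ->
    p `<=` \bigcup_(x in X) x -> exists2 x, X x & p `<=` x.

Definition Jp (U : Type) (L : set (set U)) : set (set U) := [set p | cjp L p].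

(* Main.v *)
Require Import Defs.
From mathcomp Require Import all_boot classical_sets.
From mathcomp Require Import boolp.
Local Open Scope classical_set_scope.

Lemma Rimg_in (U : Type) (R : set (U * U)) x : wlattice R (Rimg R x).
Proof.
exists [set x] => //; apply/seteqP; split => z /=.
  by case=> y [Hy Ey]; rewrite /set1 /= in Ey; subst.
by move=> H; exists x.
Qed.

Lemma i_iii (U : Type) (R : set (U * U)) x :
  cjp (wlattice R) (Rimg R x) ->
  exists2 w, Rimg R x w & forall y : U, Rimg R y w -> Rimg R x `<=` Rimg R y.
Proof.
move=> [_ H]; apply: contrapT => Hn.
have Hall : forall w, Rimg R x w -> exists y, Rimg R y w /\ ~ (Rimg R x `<=` Rimg R y).
  move=> w Hw; apply: contrapT => Hn2; apply: Hn; exists w => // y Hy.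
  by apply: contrapT => Hs; apply: Hn2; exists y.
have h1 : [set Rimg R y | y in [set y | ~ (Rimg R x `<=` Rimg R y)]] `<=` wlattice R.
  by move=> A [y _ <-]; exact: Rimg_in.
have h2 : Rimg R x `<=` \bigcup_(A in [set Rimg R y | y in [set y | ~ (Rimg R x `<=` Rimg R y)]]) A.
  move=> w Hw; have [y [Hyw Hny]] := Hall w Hw.
  by exists (Rimg R y) => //; exists y.
have [A [y Hy <-] Hsub] := H _ h1 h2.
exact: Hy.
Qed.

Lemma iii_i (U : Type) (R : set (U * U)) x :
  (exists2 w, Rimg R x w & forall y : U, Rimg R y w -> Rimg R x `<=` Rimg R y) ->
  cjp (wlattice R) (Rimg R x).
Proof.
move=> [w Hw Hc]; split; first exact: Rimg_in.
move=> X XL Hsub; have [A XA Aw] := Hsub w Hw.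
exists A => //; have [Y _ EA] := XL A XA.
subst A; case: Aw => y [Ryw Yy].
move=> z Hz; exists y; split => //; exact: (Hc y Ryw z Hz).
Qed.

Lemma ii_iii (U : Type) (R : set (U * U)) x :
  (~ (Rimg R x `<=`
             \bigcup_(y in [set y | ~ (Rimg R x `<=` Rimg R y)]) Rimg R y) <->
        exists2 w, Rimg R x w &
          forall y : U, Rimg R y w -> Rimg R x `<=` Rimg R y).
Proof.
split.
- move=> H; apply: contrapT => Hn; apply: H => w Hw.
  apply: contrapT => Hn2; apply: Hn; exists w => // y Hy.
  by apply: contrapT => Hs; apply: Hn2; exists y.
- move=> [w Hw Hc] H; have [y Hy Hyw] := H w Hw; exact: Hy (Hc y Hyw).
Qed.

Lemma Jp_w (U : Type) (R : set (U * U)) :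
  Jp (wlattice R) = [set Rimg R x | x in [set x | coreR R x !=set0]].
Proof.
apply/seteqP; split => p.
- move=> Hp; have [[Y _ Ep] H] := (Hp : cjp _ _).
  have h1 : [set Rimg R y | y in Y] `<=` wlattice R.
    by move=> A [y _ <-]; exact: Rimg_in.
  have h2 : p `<=` \bigcup_(A in [set Rimg R y | y in Y]) A.
    move=> z; rewrite -Ep => -[y [Ryz Yy]]; exists (Rimg R y) => //; by exists y.
  have [A [y Yy <-] Hsub] := H _ h1 h2.
    have Epy : p = Rimg R y.
      apply/seteqP; split => // z Hz; rewrite -Ep; by exists y.
    rewrite Epy in Hp *; have [w Hw Hc] := @i_iii _ _ _ Hp.
    by exists y; [exists w|].
- move=> [x [w [Hw Hc]] <-]; apply: iii_i; by exists w.
Qed.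

Theorem mainTheorem10 (U : Type) (R : set (U * U)) :
  (forall x : U,
     (cjp (wlattice R) (Rimg R x) <->
        ~ (Rimg R x `<=`
             \bigcup_(y in [set y | ~ (Rimg R x `<=` Rimg R y)]) Rimg R y)) /\
     (~ (Rimg R x `<=`
             \bigcup_(y in [set y | ~ (Rimg R x `<=` Rimg R y)]) Rimg R y) <->
        exists2 w, Rimg R x w &
          forall y : U, Rimg R y w -> Rimg R x `<=` Rimg R y)) /\
  Jp (wlattice R) = [set Rimg R x | x in [set x | coreR R x !=set0]] /\
  Jp (blattice R) = [set Rbreve R x | x in [set x | coreRbreve R x !=set0]].
Proof.
split; [|split; [exact: Jp_w|]].
- move=> x; split; last exact: ii_iii.
  rewrite ii_iii; split; [exact: i_iii|exact: iii_i].
- exact (@Jp_w U (fun p : U * U => R (p.2, p.1))).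
Qed.
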